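(* For every positive integer $n$, $N'(n,1,0)=n$.
   Context: $\mathbb{Z}_4$ is the ring of integers modulo $4$; a $\mathbb{Z}_4$-code of length $n$ is a $\mathbb{Z}_4$-submodule of $\mathbb{Z}_4^n$. Two codes are equivalent if one is obtained from the other by permuting coordinates and changing the signs of some coordinates. Every $\mathbb{Z}_4$-code is permutation-equivalent to one with generator matrix $\begin{pmatrix} I_{k_1} & A & B \\ O & 2I_{k_2} & 2D\end{pmatrix}$ with $A,D$ $(0,1)$-matrices and $B$ a $\mathbb{Z}_4$-matrix; the code then has type $4^{k_1}2^{k_2}$. The trivial extension of a code $C$ of length $n-1$ is $\{(c,0)\mid c\in C\}$ (the only code of length $0$ is the zero code). $N'(n,k_1,k_2)$ denotes the number of equivalence classes of $\mathbb{Z}_4$-codes of length $n$ and type $4^{k_1}2^{k_2}$ that are not equivalent to the trivial extension of any $\mathbb{Z}_4$-code of length $n-1$. *)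

(* Defs.v *)
From HB Require Import structures.
From mathcomp Require Import all_boot all_order all_algebra all_fingroup.
Set Implicit Arguments. Unset Strict Implicit. Unset Printing Implicit Defensive.
Import GRing.Theory.
Local Open Scope ring_scope.

Notation Z4 := 'Z_4.
Notation word n := 'rV[Z4]_n.

Definition is_code n (C : {set word n}) : bool :=
  [&& (0 : word n) \in C,
      [forall x in C, forall y in C, x + y \in C] &
      [forall a : Z4, forall x in C, a *: x \in C]].

Definition permw n (s : 'S_n) (x : word n) : word n := \row_j x 0 (s j).

Definition code_equiv n (C D : {set word n}) : bool :=
  [exists s : 'S_n, exists e : {ffun 'I_n -> bool},
     D == [set (\row_j ((-1) ^+ e j * x 0 (s j)) : word n) | x : word n in C]].

(* G is a generator matrix in standard form
   ( I_k1  A    B  )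
   ( O    2I_k2 2D )  with A, D (0,1)-matrices, B arbitrary. *)
Definition std_gen n k1 k2 (G : 'M[Z4]_(k1 + k2, n)) : bool :=
  [forall i : 'I_(k1 + k2), forall j : 'I_n,
    if (i < k1)%N then
      (if (j < k1)%N then G i j == (i == j :> nat)%:R
       else if (j < k1 + k2)%N then (G i j == 0) || (G i j == 1)
       else true)
    else
      (if (j < k1)%N then G i j == 0
       else if (j < k1 + k2)%N then G i j == ((i == j :> nat)%:R *+ 2)
       else (G i j == 0) || (G i j == 2%:R))].

(* C has type 4^k1 2^k2: C is permutation-equivalent to the code generated
   by a standard-form generator matrix. *)
Definition has_type n k1 k2 (C : {set word n}) : bool :=
  (k1 + k2 <= n)%N &&
  [exists G : 'M[Z4]_(k1 + k2, n), exists s : 'S_n,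
     std_gen G && (C == [set permw s (c *m G) | c in [set: 'rV[Z4]_(k1 + k2)]])].

Definition ext_word n (c : word n.-1) : word n :=
  \row_(j < n) (if (insub (j : nat) : option 'I_n.-1) is Some k
                then c 0 k else 0).

(* Trivial extension of a code C0 of length n.-1 to length n (append 0). *)
Definition triv_ext n (C0 : {set word n.-1}) : {set word n} :=
  [set @ext_word n c | c in C0].

Definition is_triv_ext n (C : {set word n}) : bool :=
  [exists C0 : {set word n.-1}, is_code C0 && (C == triv_ext C0)].

Definition Ncodes n k1 k2 : {set {set word n}} :=
  [set C | [&& is_code C, has_type k1 k2 C &
             ~~ [exists D, is_triv_ext D && code_equiv C D]]].

Definition Nprime n k1 k2 : nat :=
  #|[set [set D | code_equiv C D] | C in Ncodes n k1 k2]|.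

(* Main.v *)
Require Import Defs.
From mathcomp Require Import all_boot all_order all_algebra all_fingroup.
Set Implicit Arguments. Unset Strict Implicit. Unset Printing Implicit Defensive.
Import GRing.Theory.
Local Open Scope ring_scope.

Ltac z4c := case=> [[|[|[|[|?]]]] ?] //=.
Lemma z4a_b : forall x : Z4, (x != 0) ==> ((-1)^+(x == -1) * (if x == 2 then 2 else 1) == x).
Proof. z4c; by vm_compute. Qed.
Lemma z4a (x : Z4) : x != 0 -> (-1)^+(x == -1) * (if x == 2 then 2 else 1) = x.
Proof. by move=> h; apply/eqP; move: (z4a_b x); rewrite h. Qed.
Lemma z4b_b : forall a y z : Z4, (a * y == 1) ==> ((a * z == 2) == (z == 2)).
Proof. z4c; z4c; z4c; by vm_compute. Qed.
Lemma z4b (a y z : Z4) : a * y = 1 -> (a * z == 2) = (z == 2).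
Proof. by move=> /eqP h; move: (z4b_b a y z); rewrite h => /eqP. Qed.
Lemma z4c_b : forall (b : bool) (y : Z4), ((-1)^+b * y == 2) == (y == 2).
Proof. case; z4c; by vm_compute. Qed.
Lemma z4c (b : bool) (y : Z4) : ((-1)^+b * y == 2) = (y == 2).
Proof. by have /eqP := z4c_b b y. Qed.
Lemma z4d_b : forall (b : bool) (y : Z4), ((-1)^+b * y == 0) ==> (y == 0).
Proof. case; z4c; by vm_compute. Qed.
Lemma z4d (b : bool) (y : Z4) : (-1)^+b * y = 0 -> y = 0.
Proof. by move=> /eqP h; apply/eqP; move: (z4d_b b y); rewrite h. Qed.
Lemma z12 : (1 : Z4) != 2. Proof. by vm_compute. Qed.
Lemma z10 : (1 : Z4) != 0. Proof. by vm_compute. Qed.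
Lemma z20 : (2 : Z4) != 0. Proof. by vm_compute. Qed.

Definition Tf n (s : 'S_n) (e : {ffun 'I_n -> bool}) (x : word n) : word n :=
  \row_j ((-1) ^+ e j * x 0 (s j)).
Definition span n (v : word n) : {set word n} := [set a *: v | a : Z4].
Definition cls n (C : {set word n}) := [set D | code_equiv C D].

Lemma code_equivP n (C D : {set word n}) :
  reflect (exists s e, D = Tf s e @: C) (code_equiv C D).
Proof.
apply: (iffP existsP) => [[s /existsP [e /eqP ->]]|[s [e ->]]].
  by exists s, e.
by exists s; apply/existsP; exists e.
Qed.

Lemma TfZ n (s : 'S_n) (e : {ffun 'I_n -> bool}) (a : Z4) (x : word n) : Tf s e (a *: x) = a *: Tf s e x.
Proof. by apply/rowP => j; rewrite !mxE mulrCA. Qed.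

Lemma Tf_span n (s : 'S_n) (e : {ffun 'I_n -> bool}) (v : word n) : Tf s e @: span v = span (Tf s e v).
Proof. rewrite -imset_comp; apply: eq_imset => a /=; exact: TfZ. Qed.

Lemma Tf_comp n (s s' : 'S_n) (e e' : {ffun 'I_n -> bool}) (x : word n) :
  Tf s' e' (Tf s e x) = Tf (s' * s)%g [ffun j => e' j (+) e (s' j)] x.
Proof. by apply/rowP => j; rewrite !mxE ffunE permM signr_addb mulrA. Qed.

Lemma Tf_invK n (s : 'S_n) (e : {ffun 'I_n -> bool}) (x : word n) : Tf s^-1%g [ffun j => e (s^-1%g j)] (Tf s e x) = x.
Proof. by apply/rowP => j; rewrite !mxE ffunE permKV signrMK. Qed.

Lemma Tf1 n (x : word n) : Tf 1%g [ffun=> false] x = x.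
Proof. by apply/rowP => j; rewrite !mxE ffunE perm1 expr0 mul1r. Qed.

Lemma ce_refl n (C : {set word n}) : code_equiv C C.
Proof.
apply/code_equivP; exists 1%g, [ffun=> false].
apply/setP => x; apply/idP/imsetP => [xC|[y yC ->]]; last by rewrite Tf1.
by exists x; rewrite ?Tf1.
Qed.

Lemma ce_sym n (C D : {set word n}) : code_equiv C D -> code_equiv D C.
Proof.
case/code_equivP => s [e ->]; apply/code_equivP.
exists s^-1%g, [ffun j => e (s^-1%g j)]; rewrite -imset_comp.
apply/setP => x; apply/idP/imsetP => [xC|[y yC ->]]; last by rewrite /= Tf_invK.
by exists x => //; rewrite /= Tf_invK.
Qed.

Lemma ce_trans n (C D E : {set word n}) :
  code_equiv C D -> code_equiv D E -> code_equiv C E.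
Proof.
case/code_equivP => s [e ->]; case/code_equivP => s' [e' ->].
apply/code_equivP; exists (s' * s)%g, [ffun j => e' j (+) e (s' j)].
rewrite -imset_comp; apply: eq_imset => x /=; exact: Tf_comp.
Qed.

Lemma cls_eq n (C D : {set word n}) : code_equiv C D -> cls C = cls D.
Proof.
move=> h; apply/setP => X; rewrite !inE; apply/idP/idP => h2.
  exact: ce_trans (ce_sym h) h2.
exact: ce_trans h h2.
Qed.

Lemma span_code n (v : word n) : is_code (span v).
Proof.
rewrite /is_code; apply/and3P; split.
- by apply/imsetP; exists 0; rewrite ?inE // scale0r.
- apply/forallP => x; apply/implyP => /imsetP [a _ ->].
  apply/forallP => y; apply/implyP => /imsetP [b _ ->].
  by apply/imsetP; exists (a + b); rewrite ?inE // scalerDl.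
- apply/forallP => c; apply/forallP => x; apply/implyP => /imsetP [a _ ->].
  by apply/imsetP; exists (c * a); rewrite ?inE // scalerA.
Qed.

Lemma triv_span m (v : word m.+1) : v 0 ord_max = 0 -> is_triv_ext (span v).
Proof.
move=> h0; apply/existsP.
exists (span (\row_(k < m) v 0 (widen_ord (leqnSn m) k))).
rewrite span_code /=; apply/eqP.
rewrite /triv_ext /span -imset_comp; apply: eq_imset => a /=.
apply/rowP => j; rewrite !mxE; case: insubP => [k _ hk|hj]; rewrite ?mxE.
  by congr (_ * v 0 _); apply: val_inj; rewrite /= hk.
have -> : j = ord_max.
  by apply/val_inj/eqP; rewrite /= eqn_leq -ltnS ltn_ord leqNgt.
by rewrite h0 mulr0.
Qed.

Lemma not_triv m (v : word m.+1) : (forall j, v 0 j != 0) ->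
  ~~ [exists D, is_triv_ext D && code_equiv (span v) D].
Proof.
move=> hv; apply/negP => /existsP [D /andP [/existsP [C0 /andP [_ /eqP hD]]]].
case/code_equivP => s [e hD'].
have : Tf s e v \in D.
  by rewrite hD' Tf_span; apply/imsetP; exists 1; rewrite ?inE ?scale1r.
rewrite hD => /imsetP [c _ hc].
have := congr1 (fun x : word m.+1 => x 0 ord_max) hc.
rewrite /ext_word /= !mxE insubN ?ltnn // => /z4d /eqP.
by rewrite (negbTE (hv _)).
Qed.

Lemma imset_gen n (G : 'M[Z4]_(1 + 0, n)) (s : 'S_n) :
  [set permw s (c *m G) | c in [set: 'rV[Z4]_(1 + 0)]] = span (\row_j G 0 (s j)).
Proof.
apply/setP => x; apply/imsetP/imsetP => [[c _ ->]|[a _ ->]].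
  exists (c 0 0); rewrite ?inE //; apply/rowP => j.
  by rewrite /permw !mxE big_ord1.
exists (\row_ _ a : 'rV_(1 + 0)); rewrite ?inE //; apply/rowP => j.
by rewrite /permw !mxE big_ord1 ?mxE.
Qed.

Lemma has_type_span m (v : word m.+1) : v 0 ord0 = 1 -> has_type 1 0 (span v).
Proof.
move=> h1; rewrite /has_type; apply/andP; split => //.
apply/existsP; exists (v : 'M_(1 + 0, m.+1)); apply/existsP; exists 1%g.
apply/andP; split.
  apply/forallP => i; apply/forallP => j.
  case: i => [[|i] hi] //=.
  have -> : Ordinal hi = 0 by apply: val_inj.
  case: j => [[|j] hj] //=.
  have -> : Ordinal hj = ord0 by apply: val_inj.
  by rewrite h1.
apply/eqP; rewrite imset_gen; congr span; apply/rowP => j.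
by rewrite mxE perm1.
Qed.

Definition wv m (t : nat) : word m.+1 :=
  \row_(k < m.+1) (if (m.+1 - t <= k)%N then 2 else 1).

Definition cnt2 n (v : word n) := count (fun j => v 0 j == 2) (enum 'I_n).

Lemma cnt2_w m t : (t <= m.+1)%N -> cnt2 (wv m t) = t.
Proof.
move=> ht; rewrite /cnt2.
have E : (fun k : 'I_m.+1 => wv m t 0 k == 2) =1 (fun k => m.+1 - t <= k)%N.
  by move=> k; rewrite mxE; case: ifP; rewrite ?eqxx // (negbTE z12).
rewrite (eq_count E).
rewrite (_ : count _ _ = count (fun i => m.+1 - t <= i)%N (iota 0 m.+1)); last first.
  by rewrite -val_enum_ord count_map.
rewrite -{2}(subnK ht) iotaD count_cat add0n.
rewrite (@eq_in_count _ _ pred0); last first.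
  by move=> i; rewrite mem_iota add0n /= => hi; rewrite leqNgt hi.
rewrite count_pred0 add0n (@eq_in_count _ _ predT); last first.
  by move=> i; rewrite mem_iota /= => /andP [hi _].
by rewrite count_predT size_iota.
Qed.

Lemma perm_enum_perm n (s : 'S_n) : perm_eq (map s (enum 'I_n)) (enum 'I_n).
Proof.
apply: uniq_perm; [rewrite map_inj_uniq ?enum_uniq //; exact: perm_inj | exact: enum_uniq |].
move=> i; rewrite mem_enum; apply/mapP; exists (s^-1%g i); rewrite ?mem_enum ?permKV //.
Qed.

Lemma cnt2_Tf n (s : 'S_n) (e : {ffun 'I_n -> bool}) (x : word n) : cnt2 (Tf s e x) = cnt2 x.
Proof.
rewrite /cnt2.
have E : (fun j => Tf s e x 0 j == 2) =1 preim s (fun j => x 0 j == 2).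
  by move=> j; rewrite /= mxE z4c.
rewrite (eq_count E) -count_map.
exact: (seq.permP (perm_enum_perm s)).
Qed.

Lemma cnt2_Z n (a y : Z4) (x : word n) : a * y = 1 -> cnt2 (a *: x) = cnt2 x.
Proof.
move=> h; rewrite /cnt2; apply: eq_count => j /=; rewrite mxE; exact: z4b h.
Qed.

Lemma perm_eq_bool (s1 s2 : seq bool) :
  size s1 = size s2 -> count id s1 = count id s2 -> perm_eq s1 s2.
Proof.
move=> hs hc; apply/allP => x _.
have E' : forall s : seq bool, count (pred1 true) s = count id s.
  by move=> s; apply: eq_count => b; case: b.
have E : forall s : seq bool, count (pred1 false) s = (size s - count id s)%N.
  move=> s; rewrite -(count_predC id s) addKn; apply: eq_count => b; by case: b.
apply/eqP; case: x.
  by rewrite (E' s1) (E' s2).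
by rewrite (E s1) (E s2) hs hc.
Qed.

Theorem mainTheorem6 (n : nat) : (0 < n)%N -> Nprime n 1 0 = n.
Proof.
case: n => // m _.
pose w (t : 'I_m.+1) := wv m t.
pose K (t : 'I_m.+1) := cls (span (w t)).
have w0 : forall t, w t 0 ord0 = 1.
  by move=> t; rewrite mxE leqn0 subn_eq0 leqNgt ltn_ord.
have wnz : forall t j, w t 0 j != 0.
  by move=> t j; rewrite mxE; case: ifP => _; [exact: z20 | exact: z10].
have Cin : forall t, span (w t) \in Ncodes m.+1 1 0.
  move=> t; rewrite inE span_code has_type_span ?w0 // not_triv //.
have Kinj : injective K.
  move=> t1 t2 hK.
  have : span (w t2) \in K t1 by rewrite hK inE ce_refl.
  rewrite inE => /code_equivP [s [e]].
  rewrite Tf_span => h.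
  have : w t2 \in span (Tf s e (w t1)).
    by rewrite -h; apply/imsetP; exists 1; rewrite ?inE ?scale1r.
  case/imsetP => a _ ha.
  have h1 : a * Tf s e (w t1) 0 ord0 = 1.
    have := congr1 (fun x : word m.+1 => x 0 ord0) ha.
    rewrite w0 mxE.
    by move/esym.
  have := congr1 (@cnt2 _) ha.
  rewrite (cnt2_Z _ h1).
  rewrite cnt2_Tf.
  rewrite /w.
  rewrite (cnt2_w (ltnW (ltn_ord t1))) (cnt2_w (ltnW (ltn_ord t2))).
  (move=> ht; apply: val_inj; exact: esym).
have Kall : forall C, C \in Ncodes m.+1 1 0 -> exists t, cls C = K t.
  move=> C; rewrite inE => /and3P [_ ht hnt].
  move: ht => /andP [_ /existsP [G /existsP [s0 /andP [hG /eqP hC]]]].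
  rewrite imset_gen in hC.
  set v := \row_j G 0 (s0 j) in hC.
  have hv1 : v 0 (s0^-1%g ord0) = 1.
    rewrite mxE permKV.
    have := forallP hG 0 => /forallP /(_ ord0) /=.
    by move/eqP.
  have hv : forall j, v 0 j != 0.
    move=> j; apply/negP => /eqP hj; move/negP: hnt; apply.
    apply/existsP; exists (span (Tf (tperm j ord_max) [ffun=> false] v)).
    rewrite triv_span /=; last by rewrite mxE ffunE tpermR expr0 mul1r.
    by apply/code_equivP; exists (tperm j ord_max), [ffun=> false]; rewrite hC Tf_span.
  have ht : (cnt2 v < m.+1)%N.
    rewrite /cnt2 -[X in (_ < X)%N]size_enum_ord -(count_predC (fun j => v 0 j == 2)).
    rewrite -{1}[count _ _]addn0 ltn_add2l -has_count; apply/hasP.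
    by exists (s0^-1%g ord0); rewrite ?mem_enum //= hv1 z12.
  pose T := Ordinal ht.
  pose bv := [tuple (v 0 j == 2) | j < m.+1].
  pose bw := [tuple (w T 0 k == 2) | k < m.+1].
  have hperm : perm_eq bv bw.
    apply: perm_eq_bool; first by rewrite !size_tuple.
    have E : forall f : 'I_m.+1 -> bool, val [tuple f i | i < m.+1] = map f (enum 'I_m.+1).
      by move=> f.
    rewrite /bv /bw !E !count_map -!enumT.
    apply: (@etrans _ _ (cnt2 v)); first by rewrite /cnt2; apply: eq_count.
    by rewrite -[in LHS](cnt2_w (ltnW ht)) /cnt2; apply: eq_count.
  case/tuple_permP: hperm => p hp.
  pose e := [ffun j => v 0 j == -1].
  have hTf : Tf p e (w T) = v.
    apply/rowP => j; rewrite mxE ffunE.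
    have hj : (v 0 j == 2) = (w T 0 (p j) == 2).
      have := congr1 (fun s => nth false s j) hp.
      by rewrite /bv !nth_mktuple /bw tnth_mktuple.
    have -> : w T 0 (p j) = if v 0 j == 2 then 2 else 1.
      rewrite hj mxE; case: leqP => _; by rewrite ?eqxx // (negbTE z12).
    exact: z4a.
  exists T; apply: cls_eq; apply: ce_sym.
  by apply/code_equivP; exists p, e; rewrite hC Tf_span hTf.
rewrite /Nprime (_ : [set _ | C in _] = [set K t | t : 'I_m.+1]).
  by rewrite card_imset // card_ord.
apply/setP => X; apply/imsetP/imsetP => [[C hC ->]|[t _ ->]].
  by have [t ht] := Kall C hC; exists t.
exists (span (w t)); [exact: Cin | reflexivity].
Qed.
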